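(* For any matching $\pi$ of size $n$, $\sum_{p=1}^{n-1} m_p(\pi)\le d(\pi)$, and $d(\pi)-\sum_{p=1}^{n-1} m_p(\pi)$ is an even nonnegative integer.
   Context: A matching of size $n$ is a set of $n$ disjoint noncrossing pairs partitioning $\{1,\dots,2n\}$ (no arches $\{i<j\},\{k<l\}$ with $i<k<j<l$). Encode $\pi$ by the increasing sequence $a_1<\dots<a_n$ of the smaller elements of its arches. The Young diagram $Y(\pi)$ has rows (top to bottom) of lengths $a_n-n\ge\dots\ge a_1-1$, and $d(\pi)=\sum_i(a_i-i)$ is its number of boxes. A box in row $x$ from the top and column $y$ from the left is $(x,y)$. Label box $(x,y)$ by $n+1-x-y$. The rim of a nonempty Young diagram is the set of boxes $(x,y)$ with $(x+1,y+1)$ not in the diagram; iteratively removing rims gives the rim decomposition $R_1,\dots,R_s$ of $Y(\pi)$. For each rim $R_\ell$ let $i$ be the label of its bottom-left box (in its leftmost column), $j$ the label of its top-right box (in its topmost row), $k$ its minimal label, and $B_\ell=\{k\}\cup\{i,\dots,k+1\}\cup\{j,\dots,k+1\}$ (multiset). For $1\le p\le n-1$, $m_p(\pi)$ is the multiplicity of $p$ in the multiset union of all $B_\ell$ (equivalently, $m_p(\pi)=\tfrac12(|\mathcal A^L_p|+|\mathcal A^R_p|)$ where, with $\widehat p=2n+1-p$, $\mathcal A^L_p$ is the set of arches $\{b<c\}$ with $b\le p<c<\widehat p$ and $\mathcal A^R_p$ the set of arches with $p<b<\widehat p\le c$). *)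

(* Defs.v *)
From mathcomp Require Import all_boot.
Set Implicit Arguments. Unset Strict Implicit. Unset Printing Implicit Defensive.

(* A matching of size n: a list of arches (b, c) with b < c, whose endpoints
   enumerate {1,...,2n} exactly once, and with no two crossing arches. *)
Definition matching (n : nat) (M : seq (nat * nat)) : bool :=
  [&& all (fun e => e.1 < e.2) M,
      perm_eq (flatten [seq [:: e.1; e.2] | e <- M]) (iota 1 (2 * n)) &
      all (fun e => all (fun f => ~~ ((e.1 < f.1) && (f.1 < e.2) && (e.2 < f.2))) M) M].

(* a_1 < ... < a_n : smaller elements of the arches; a_i = nth 0 (aseq M) i.-1 *)
Definition aseq (M : seq (nat * nat)) : seq nat := sort leq (map fst M).

Definition dpi (n : nat) (M : seq (nat * nat)) : nat :=
  \sum_(i < n) (nth 0 (aseq M) i - i.+1).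

(* Diagrams are predicates on boxes (x, y) (row x from top, column y from left). *)
Definition diagram := nat * nat -> bool.

(* Young diagram Y(pi): row x (1 <= x <= n) has length a_{n+1-x} - (n+1-x). *)
Definition Ydiag (n : nat) (M : seq (nat * nat)) : diagram :=
  fun b => [&& 1 <= b.1 <= n, 1 <= b.2 &
               b.2 <= nth 0 (aseq M) (n - b.1) - (n.+1 - b.1)].

Definition rim (D : diagram) : diagram := fun b => D b && ~~ D (b.1.+1, b.2.+1).
Definition strip (D : diagram) : diagram := fun b => D b && ~~ rim D b.

(* all boxes of Y(pi) lie in the grid [1,n] x [1,n] *)
Definition grid (n : nat) : seq (nat * nat) :=
  [seq (x, y) | x <- iota 1 n, y <- iota 1 n].

(* the l-th rim (0-indexed: R_{l+1}) as a list of boxes *)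
Definition rimseq (n : nat) (M : seq (nat * nat)) (l : nat) : seq (nat * nat) :=
  [seq b <- grid n | rim (iter l strip (Ydiag n M)) b].

Definition label (n : nat) (b : nat * nat) : nat := n.+1 - b.1 - b.2.

Definition seqmin (s : seq nat) : nat := foldr minn (head 0 s) s.

(* For a nonempty rim R: i = label of the bottom box of its leftmost column,
   j = label of the rightmost box of its topmost row, k = minimal label. *)
Definition rim_i (n : nat) (R : seq (nat * nat)) : nat :=
  let c := seqmin (map snd R) in
  label n (foldr maxn 0 [seq b.1 | b <- R & b.2 == c], c).
Definition rim_j (n : nat) (R : seq (nat * nat)) : nat :=
  let r := seqmin (map fst R) in
  label n (r, foldr maxn 0 [seq b.2 | b <- R & b.1 == r]).
Definition rim_k (n : nat) (R : seq (nat * nat)) : nat :=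
  seqmin [seq label n b | b <- R].

(* multiplicity of p in B = {k} + {i,...,k+1} + {j,...,k+1} *)
Definition multB (n : nat) (R : seq (nat * nat)) (p : nat) : nat :=
  let i := rim_i n R in let j := rim_j n R in let k := rim_k n R in
  (p == k) + ((k < p) && (p <= i)) + ((k < p) && (p <= j)).

(* m_p(pi): multiplicity of p in the union of the B_l over all (nonempty) rims;
   there are at most n rims. *)
Definition mp (n : nat) (M : seq (nat * nat)) (p : nat) : nat :=
  \sum_(l < n | rimseq n M l != [::]) multB n (rimseq n M l) p.

(* Main.v *)
Require Import Defs.
From mathcomp Require Import all_boot.
From Stdlib Require Import Lia.
Ltac nlia := intros;
  repeat match goal with
  | H : is_true (~~ (_ <= _)) |- _ => rewrite -ltnNge in H
  | H : is_true (_ <= _) |- _ => apply (elimT leP) in H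
  | H : is_true (_ == _) |- _ => apply (elimT eqP) in H
  | H : is_true (_ && _) |- _ => let H1 := fresh "H" in let H2 := fresh "H" in destruct (andP H) as [H1 H2]; clear H
  end;
  repeat match goal with
  | |- is_true (_ && _) => apply/andP; split
  | |- true = ?b => symmetry; change (is_true b)
  | |- false = ?b => symmetry; apply/negbTE
  | |- ?b = true => change (is_true b)
  | |- ?b = false => apply/negbTE
  end;
  match goal with
  | |- is_true (~~ (_ <= _)) => rewrite -ltnNge; apply/leP
  | |- is_true (_ <= _) => apply/leP
  | |- is_true (_ == _) => apply/eqP
  | _ => idtac end;
  try unfold addn, subn, muln in *;
  lia.

Lemma count_iota_int N a b :
  count (fun y => (a <= y) && (y <= b)) (iota 1 N) = minn b N + 1 - maxn a 1.
Proof.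
elim: N => [|N IH]; first by rewrite /= minnE maxnE; nlia.
assert (E : iota 1 N.+1 = iota 1 N ++ [:: N.+1]) by (rewrite -[N.+1]addn1 iotaD add1n addn1; reflexivity).
rewrite E.
rewrite count_cat IH /= addn0.
rewrite !minnE !maxnE.
case: (leqP a N.+1) => Ha; case: (leqP N.+1 b) => Hb /=; nlia.
Qed.

Lemma sum_int m a b :
  \sum_(1 <= p < m.+1) ((a < p) && (p <= b)) = minn m b - a.
Proof.
elim: m => [|m IH]; first by rewrite big_geq // minnE; nlia.
rewrite big_nat_recr //= IH !minnE.
case: (ltnP a m.+1) => Ha; case: (leqP m.+1 b) => Hb /=; nlia.
Qed.

Lemma seqmin_le s x : x \in s -> seqmin s <= x.
Proof.
rewrite /seqmin; elim: s (head 0 s) => [//|y s IH] h /=.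
rewrite in_cons => /orP [/eqP ->|/IH H]; first exact: geq_minl.
by rewrite geq_min H orbT.
Qed.


Lemma foldr_minn_mem (s : seq nat) h : foldr minn h s \in h :: s.
Proof.
elim: s => [|y s IH] /=; first by rewrite mem_head.
rewrite /minn; case: ifP => _; first by rewrite !in_cons eqxx orbT.
move: IH; rewrite !in_cons => /orP [->//|->]; by rewrite !orbT.
Qed.


Lemma seqmin_mem s : s != [::] -> seqmin s \in s.
Proof.
case: s => [//|y s] _; rewrite /seqmin /=.
have := foldr_minn_mem (y :: s) y; rewrite /= in_cons.
by case/orP => [/eqP ->|//]; rewrite mem_head.
Qed.

Lemma foldr_maxn_eq (s : seq nat) v :
  v \in s -> (forall x, x \in s -> x <= v) -> foldr maxn 0 s = v.
Proof.
move=> Hv Hall; apply/eqP; rewrite eqn_leq; apply/andP; split.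
  elim: s Hall {Hv} => [//|y s IH] H /=.
  by rewrite geq_max H ?mem_head // IH // => x Hx; apply: H; rewrite in_cons Hx orbT.
elim: s Hv {Hall} => [//|y s IH] /=; rewrite in_cons => /orP [/eqP ->|/IH H].
  exact: leq_maxl.
by rewrite leq_max H orbT.
Qed.

Definition flatM (M : seq (nat * nat)) := flatten [seq [:: e.1; e.2] | e <- M].

Lemma size_flatM M : size (flatM M) = 2 * size M.
Proof. elim: M => [//|e M IH]; rewrite /flatM /= in IH *; rewrite IH; nlia. Qed.

Lemma mem_fst_flatM M x : x \in map fst M -> x \in flatM M.
Proof.
elim: M => [//|e M IH] /=; rewrite /flatM /= !in_cons => /orP [->//|/IH].
by rewrite /flatM => ->; rewrite !orbT.
Qed.

Lemma uniq_fst M : uniq (flatM M) -> uniq (map fst M).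
Proof.
elim: M => [//|e M IH]; rewrite /flatM /= !in_cons negb_or => /andP [/andP [_ H1] /andP [_ H2]].
rewrite IH // andbT; apply/negP => /mem_fst_flatM; by rewrite (negbTE H1).
Qed.

Lemma count_flatM M t : all (fun e => e.1 < e.2) M ->
  count (fun x => x < t) (flatM M) <= 2 * count (fun e => e.1 < t) M.
Proof.
elim: M => [//|e M IH] /= /andP [He HM]; rewrite /flatM /= in IH *.
have := IH HM; case: (ltnP e.1 t) => H1; case: (ltnP e.2 t) => H2 /=; nlia.
Qed.

Lemma count_iota_lt t N : count (fun y => y < t) (iota 1 N) = minn t.-1 N.
Proof.
rewrite -(eq_in_count (a1 := fun y => (0 <= y) && (y <= t.-1))).
  by rewrite count_iota_int maxnE; nlia.
move=> y; rewrite mem_iota => H /=; apply/idP/idP => H'; nlia.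
Qed.

Section Match.
Variables (n : nat) (M : seq (nat * nat)).
Hypothesis HM : matching n M.

Lemma sizeM : size M = n.
Proof.
case/and3P: HM => _ /perm_size; rewrite -/(flatM M) size_flatM size_iota => H _; nlia.
Qed.

Lemma size_aseq : size (aseq M) = n.
Proof. by rewrite /aseq size_sort size_map sizeM. Qed.

Lemma aseq_ltn : sorted ltn (aseq M).
Proof.
rewrite ltn_sorted_uniq_leq sort_sorted ?andbT; last exact: leq_total.
rewrite sort_uniq uniq_fst //.
case/and3P: HM => _ /perm_uniq -> _; exact: iota_uniq.
Qed.

Lemma aseq_lt i j : i < j -> j < n -> nth 0 (aseq M) i < nth 0 (aseq M) j.
Proof.
move=> Hij Hj; apply: (@sorted_ltn_nth _ ltn ltn_trans 0 (aseq M) aseq_ltn i j) => //;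
 rewrite inE size_aseq; nlia.
Qed.

Lemma aseq_le i j : i <= j -> j < n -> nth 0 (aseq M) i <= nth 0 (aseq M) j.
Proof.
rewrite leq_eqVlt => /orP [/eqP -> //|Hij Hj]; apply: ltnW; exact: aseq_lt.
Qed.

Lemma aseq_bound i : i < n -> nth 0 (aseq M) i <= i.*2.+1.
Proof.
move=> Hi; set t := nth 0 (aseq M) i.
have Hc : count (fun x => x < t) (aseq M) <= i.
  rewrite -(cat_take_drop i (aseq M)) count_cat.
  have -> : count (fun x => x < t) (drop i (aseq M)) = 0.
    apply/eqP; rewrite -leqn0 leqNgt -has_count; apply/hasPn => y.
    case/(nthP 0) => j; rewrite size_drop size_aseq => Hj <-.
    rewrite nth_drop -leqNgt; apply: aseq_le; nlia.
  rewrite addn0; apply: leq_trans (count_size _ _) _; rewrite size_take size_aseq Hi //.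
have : count (fun y => y < t) (iota 1 (2 * n)) <= 2 * i.
  case/and3P: HM => Hall /permP Hp _.
  rewrite -Hp -/(flatM M); apply: (leq_trans (count_flatM M t Hall)).
  rewrite leq_mul2l /=.
  have := count_map fst (fun x => x < t) M; rewrite /preim /= => <-.
  have Hps : perm_eq (aseq M) (map fst M) by rewrite /aseq perm_sort perm_refl.
  by rewrite -(permP Hps).
rewrite count_iota_lt minnE -muln2; nlia.
Qed.

Definition L (x : nat) := nth 0 (aseq M) (n - x) - (n.+1 - x).

Lemma L_mono z : 1 <= z -> z.+1 <= n -> L z.+1 <= L z.
Proof.
move=> H1 H2; rewrite /L.
have H3 : n - z.+1 < n - z by nlia.
have H4 : n - z < n by nlia.
have := aseq_lt _ _ H3 H4; nlia.
Qed.

Lemma L_bound z : 1 <= z -> z <= n -> L z <= n - z.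
Proof.
move=> H1 H2; rewrite /L.
have H4 : n - z < n by nlia.
have := aseq_bound _ H4; rewrite -muln2; nlia.
Qed.

End Match.

Definition nu n M l x := if x + l <= n then L n M (x + l) - l else 0.

Lemma iter_strip n M : matching n M -> forall l b,
  iter l strip (Ydiag n M) b = [&& 1 <= b.1, 1 <= b.2 & b.2 <= nu n M l b.1].
Proof.
move=> HM; elim=> [|l IH] [x y] /=.
  rewrite /Ydiag /nu /L /= !addn0 !subn0.
  case: (leqP x n) => Hx; rewrite ?andbT ?andbF //=; by case: y => [|y]; rewrite /= ?andbF.
rewrite /strip /rim /= !IH /=.
case: x => [|x] //=; case: y => [|y] //=.
rewrite /nu -addSnnS.
have Hm := @L_mono n M HM (x.+1 + l).
case: (leqP (x.+2 + l) n) => H1; case: (leqP (x.+1 + l) n) => H2; try nlia.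
- have {}Hm := Hm ltac:(nlia) ltac:(nlia).
  move: Hm; rewrite -addSn.
  move: (L n M (x.+2 + l)) (L n M (x.+1 + l)) => B A Hm.
  case: (ltnP y (A - l)) => H4; case: (ltnP y.+1 (B - l)) => H5 /=; nlia.
- by rewrite /= ?andbT ?andbN ltn0.
- by rewrite ltn0.
Qed.

Lemma mem_grid n b : (b \in grid n) = (1 <= b.1 <= n) && (1 <= b.2 <= n).
Proof.
case: b => x y /=; apply/allpairsP/idP => [[[x' y'] [/= Hx Hy [-> ->]]]|H].
  by rewrite !mem_iota in Hx Hy; apply/andP; split; nlia.
exists (x, y); rewrite /= !mem_iota; split => //; nlia.
Qed.

Lemma count_grid n (P : pred (nat * nat)) :
  count P (grid n) = \sum_(1 <= x < n.+1) count (fun y => P (x, y)) (iota 1 n).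
Proof.
have -> : grid n = flatten [seq [seq (x,y) | y <- iota 1 n] | x <- iota 1 n] by [].
have -> : index_iota 1 n.+1 = iota 1 n by rewrite /index_iota subSS subn0.
rewrite count_flatten sumnE big_map big_map; apply: eq_bigr => x _; by rewrite count_map.
Qed.

Lemma thresh (P : pred nat) N : 1 <= N -> P 1 -> ~~ P N ->
  exists r, [/\ 1 <= r, r < N, P r & ~~ P r.+1].
Proof.
elim: N => [//|N IH] HN1 H1 HN.
case: N IH HN1 HN => [|N] IH HN1 HN; first by rewrite H1 in HN.
case HPN: (P N.+1); last first.
  have [r [? ? ? ?]] := IH erefl H1 (negbT HPN); exists r; split => //; nlia.
by exists N.+1; split.
Qed.

Lemma sum_mult n k i j : 1 <= k -> i < n -> j < n -> k < n ->
  \sum_(1 <= p < n) ((p == k) + ((k < p) && (p <= i)) + ((k < p) && (p <= j)))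
  = 1 + (i - k) + (j - k).
Proof.
move=> Hk Hi Hj Hkn.
case: n Hi Hj Hkn => [//|m] Hi Hj Hkn.
rewrite !big_split /= !sum_int.
rewrite (eq_bigr (fun p => nat_of_bool ((k.-1 < p) && (p <= k)))); last first.
  move=> p _; congr nat_of_bool; apply/eqP/idP => H; nlia.
rewrite sum_int !minnE; nlia.
Qed.

Section Rim.
Variables (n : nat) (nu : nat -> nat).
Hypothesis mono : forall x, 1 <= x -> nu x.+1 <= nu x.
Hypothesis bnd : forall x, 1 <= x -> 1 <= nu x -> x + nu x <= n.
Lemma nu_monoW x y : 1 <= x -> x <= y -> nu y <= nu x.
Proof.
move=> Hx; elim: y => [|y IH]; first by nlia.
rewrite leq_eqVlt => /orP [/eqP <- //|Hxy].
have Hy : 1 <= y by nlia.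
exact: leq_trans (mono y Hy) (IH Hxy).
Qed.

Hypothesis ne : 1 <= nu 1.

Definition rimP b := [&& 1 <= b.1, 1 <= b.2, b.2 <= nu b.1 & nu b.1.+1 <= b.2].
Definition R := [seq b <- grid n | rimP b].


Lemma n2 : 2 <= n.
Proof. have := bnd 1 (leqnn 1) ne; nlia. Qed.

Lemma nu_n : nu n = 0.
Proof.
have := n2 => Hn.
case: (leqP 1 (nu n)) => H; last by nlia.
have Hn1 : 1 <= n by nlia.
have := bnd n Hn1 H; nlia.
Qed.

Lemma r_ex : exists r, [/\ 1 <= r, r < n, 1 <= nu r & nu r.+1 = 0].
Proof.
have Hn := n2.
have [r [H1 H2 H3 H4]] := @thresh (fun x => 1 <= nu x) n ltac:(nlia) ne ltac:(by rewrite /= nu_n).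
exists r; split => //; nlia.
Qed.

Section WithR.
Variable r : nat.
Hypotheses (r1 : 1 <= r) (rn : r < n) (nur : 1 <= nu r) (nur1 : nu r.+1 = 0).

Lemma nu_pos x : 1 <= x -> (1 <= nu x) = (x <= r).
Proof.
move=> Hx; apply/idP/idP => H.
  case: (leqP x r) => // H'; have := nu_monoW r.+1 x (ltn0Sn r) H'; nlia.
have := nu_monoW x r Hx H; nlia.
Qed.

Lemma memR b : (b \in R) = rimP b && (b.1 <= n) && (b.2 <= n).
Proof.
rewrite mem_filter mem_grid /rimP; case: b => x y /=.
apply/idP/idP => H; nlia.
Qed.

Lemma tele m : \sum_(1 <= x < m.+1) (nu x - nu x.+1) = nu 1 - nu m.+1.
Proof.
elim: m => [|m IH]; first by rewrite big_geq // subnn.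
rewrite big_nat_recr //= IH.
have := mono m.+1 (ltn0Sn m); have := nu_monoW 1 m.+1 (leqnn 1) (ltn0Sn m); nlia.
Qed.


Lemma sizeR : size R = nu 1 + r - 1.
Proof.
rewrite size_filter count_grid.
rewrite (eq_big_nat _ _ (F2 := fun x => (nu x - nu x.+1) + ((0 < x) && (x <= r.-1)))); last first.
  move=> x /andP [Hx1 Hxn].
  rewrite -(eq_in_count (a1 := fun y => (nu x.+1 <= y) && (y <= nu x))); last first.
    move=> y; rewrite mem_iota /rimP /= => Hy; apply/idP/idP => H; nlia.
  rewrite count_iota_int.
  have Hb : nu x <= n.
    case: (leqP 1 (nu x)) => H; last by nlia.
    have := bnd x Hx1 H; nlia.
  have Hm := mono x Hx1.
  have Hp := nu_pos x.+1 (ltn0Sn x).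
  rewrite minnE maxnE.
  case: (ltnP x r) => Hxr.
    have H1 : 1 <= nu x.+1 by rewrite Hp.
    have E : (0 < x <= r.-1) = true by nlia.
    rewrite E /=; nlia.
  have H1 : nu x.+1 = 0 by apply/eqP; rewrite -leqn0 leqNgt Hp; nlia.
  have E : (0 < x <= r.-1) = false by rewrite Hx1 /=; apply/negbTE; rewrite -ltnNge; nlia.
  rewrite E /=; nlia.
rewrite big_split /= tele.
rewrite sum_int.
have Hn1 : 1 <= n by have := n2; nlia.
have := nu_monoW n n.+1 Hn1 (leqnSn _); rewrite nu_n minnE; nlia.
Qed.


Lemma inR_r1 : (r, 1) \in R.
Proof. rewrite memR /rimP /= nur1; nlia. Qed.

Lemma inR_1nu : (1, nu 1) \in R.
Proof.
have := mono 1 (leqnn 1); have := bnd 1 (leqnn 1) ne.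
rewrite memR /rimP /=; nlia.
Qed.

Lemma R_ne : R != [::].
Proof. by apply/eqP => H; have := inR_r1; rewrite H. Qed.

Lemma minsnd : seqmin (map snd R) = 1.
Proof.
apply/eqP; rewrite eqn_leq; apply/andP; split.
  apply: seqmin_le; apply/mapP; exists (r, 1) => //; exact: inR_r1.
have : seqmin (map snd R) \in map snd R.
  by apply: seqmin_mem; rewrite -size_eq0 size_map size_eq0 R_ne.
case/mapP => b; rewrite memR /rimP => Hb ->; nlia.
Qed.

Lemma minfst : seqmin (map fst R) = 1.
Proof.
apply/eqP; rewrite eqn_leq; apply/andP; split.
  apply: seqmin_le; apply/mapP; exists (1, nu 1) => //; exact: inR_1nu.
have : seqmin (map fst R) \in map fst R.
  by apply: seqmin_mem; rewrite -size_eq0 size_map size_eq0 R_ne.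
case/mapP => b; rewrite memR /rimP => Hb ->; nlia.
Qed.

Lemma maxrow : foldr maxn 0 [seq b.1 | b <- R & b.2 == 1] = r.
Proof.
apply: foldr_maxn_eq.
  apply/mapP; exists (r, 1) => //; rewrite mem_filter inR_r1 //.
move=> x /mapP [[x' y']]; rewrite mem_filter memR /rimP /= => /andP [/eqP Hy Hb] ->.
have Hx' : 1 <= x' by nlia.
rewrite -(nu_pos x' Hx'); subst y'; nlia.
Qed.

Lemma maxcol : foldr maxn 0 [seq b.2 | b <- R & b.1 == 1] = nu 1.
Proof.
apply: foldr_maxn_eq.
  apply/mapP; exists (1, nu 1) => //; rewrite mem_filter inR_1nu //.
move=> y /mapP [[x' y']]; rewrite mem_filter memR /rimP /= => /andP [/eqP Hx Hb] ->.
subst x'; nlia.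
Qed.

Lemma rim_i_eq : rim_i n R = n - r.
Proof. rewrite /rim_i minsnd maxrow /label /=; nlia. Qed.

Lemma rim_j_eq : rim_j n R = n - nu 1.
Proof. rewrite /rim_j minfst maxcol /label /=; nlia. Qed.

Lemma rim_k_ex : exists x y, [/\ (x, y) \in R, rim_k n R = label n (x, y),
   rim_k n R <= label n (r, 1) & rim_k n R <= label n (1, nu 1)].
Proof.
have Hne : [seq label n b | b <- R] != [::].
  by rewrite -size_eq0 size_map size_eq0 R_ne.
have := seqmin_mem _ Hne; case/mapP => [[x y]] Hb Hk.
exists x, y; split => //.
  by apply: seqmin_le; apply: map_f; exact: inR_r1.
by apply: seqmin_le; apply: map_f; exact: inR_1nu.
Qed.

Lemma rim_main : \sum_(1 <= p < n) multB n R p <= size R /\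
  ~~ odd (size R - \sum_(1 <= p < n) multB n R p).
Proof.
have [x [y [HR Hk Hki Hkj]]] := rim_k_ex.
move: HR; rewrite memR /rimP /= => /andP [/andP [/and4P [Hx Hy Hyx Hx1] Hxn] Hyn].
have Hbx := bnd x Hx (leq_trans Hy Hyx).
have Hxr : x <= r by rewrite -nu_pos //; nlia.
have Hnx := nu_monoW 1 x (leqnn 1) Hx.
have H1 := bnd 1 (leqnn 1) ne.
rewrite /multB rim_i_eq rim_j_eq.
rewrite /label /= in Hk Hki Hkj.
rewrite sum_mult; try nlia.
rewrite sizeR.
have -> : nu 1 + r - 1 - (1 + (n - r - rim_k n R) + (n - nu 1 - rim_k n R))
   = 2 * (nu 1 + r - x - y) by nlia.
split; first by nlia.
by rewrite mul2n odd_double.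
Qed.

End WithR.
End Rim.

Section Final.
Variables (n : nat) (M : seq (nat * nat)).
Hypothesis HM : matching n M.

Let Y := Ydiag n M.

Lemma nu_mono l x : 1 <= x -> nu n M l x.+1 <= nu n M l x.
Proof.
move=> Hx; rewrite /nu.
case: (leqP (x.+1 + l) n) => H1; last by [].
have H2 : x + l <= n by nlia.
rewrite H2 addSn.
have H3 : 1 <= x + l by nlia.
have H4 : (x + l).+1 <= n by nlia.
have := @L_mono n M HM (x + l) H3 H4; nlia.
Qed.

Lemma nu_bnd l x : 1 <= x -> 1 <= nu n M l x -> x + nu n M l x <= n.
Proof.
rewrite /nu; case: (leqP (x + l) n) => H1 Hx H2; last by nlia.
have H3 : 1 <= x + l by nlia.
have := @L_bound n M HM (x + l) H3 H1; nlia.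
Qed.

Lemma rimseq_eq l : rimseq n M l = R n (nu n M l).
Proof.
apply: eq_filter => [[x y]]; rewrite /rim /= !(@iter_strip n M HM) /= -ltnNge.
by rewrite ltnS /rimP /= !andbA.
Qed.

Lemma count_rim_strip (D : diagram) s :
  count D s = count (rim D) s + count (strip D) s.
Proof.
elim: s => [//|b s IH] /=; rewrite IH /rim /strip /rim.
by case: (D b); case: (D (b.1.+1, b.2.+1)) => /=; nlia.
Qed.

Lemma tele_rims m :
  \sum_(l < m) size (rimseq n M l) + count (iter m strip Y) (grid n) = count Y (grid n).
Proof.
elim: m => [|m IH]; first by rewrite big_ord0.
rewrite big_ord_recr /= -IH (count_rim_strip (iter m strip Y)) /rimseq size_filter.
by rewrite -addnA.
Qed.

Lemma iter_n_empty : count (iter n strip Y) (grid n) = 0.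
Proof.
apply/eqP; rewrite -leqn0 leqNgt -has_count; apply/hasPn => [[x y]] _.
rewrite /Y (@iter_strip n M HM) /nu /=.
case: (leqP (x + n) n) => H.
  by have -> : x = 0 by nlia.
by case: y => [|y] /=; rewrite ?andbF.
Qed.

Lemma count_Y : count Y (grid n) = dpi n M.
Proof.
rewrite count_grid.
rewrite (eq_big_nat _ _ (F2 := L n M)); last first.
  move=> x /andP [Hx1 Hxn].
  rewrite -(eq_in_count (a1 := fun y => (1 <= y) && (y <= L n M x))); last first.
    move=> y; rewrite mem_iota /Y /Ydiag /L /= => Hy; apply/idP/idP => H; nlia.
  rewrite count_iota_int.
  have := @L_bound n M HM x Hx1 Hxn; rewrite minnE maxnE; nlia.
rewrite /dpi big_nat_rev /= -(big_mkord (fun _ => true) (fun i => nth 0 (aseq M) i - i.+1)).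
rewrite big_add1 /=.
apply: eq_big_nat => i /andP [_ Hi].
rewrite /L; have -> : 1 + n.+1 - i.+2 = n - i by nlia.
have -> : n - (n - i) = i by nlia.
have -> : n.+1 - (n - i) = i.+1 by nlia.
by [].
Qed.

Lemma per_l l : rimseq n M l != [::] ->
  \sum_(1 <= p < n) multB n (rimseq n M l) p <= size (rimseq n M l) /\
  ~~ odd (size (rimseq n M l) - \sum_(1 <= p < n) multB n (rimseq n M l) p).
Proof.
rewrite rimseq_eq => Hne.
have ne : 1 <= nu n M l 1.
  case: (leqP 1 (nu n M l 1)) => // H0.
  move: Hne; rewrite /R -has_filter => /hasP [[x y] _]; rewrite /rimP /= => H.
  have Hx : 1 <= x by nlia.
  have := @nu_monoW (nu n M l) (@nu_mono l) 1 x (leqnn 1) Hx; nlia.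
have [r [r1 rn nur nur1]] := @r_ex n (nu n M l) (@nu_bnd l) ne.
have := (@rim_main n (nu n M l) (@nu_mono l) (@nu_bnd l) ne r r1 rn nur nur1). done.
Qed.

End Final.

Theorem proposition3p3 (n : nat) (M : seq (nat * nat)) :
  matching n M ->
  \sum_(1 <= p < n) mp n M p <= dpi n M /\
  ~~ odd (dpi n M - \sum_(1 <= p < n) mp n M p).
Proof.
move=> HM.
have Hd : dpi n M = \sum_(l < n | rimseq n M l != [::]) size (rimseq n M l).
  rewrite -(@count_Y n M HM) -(@tele_rims n M n) (@iter_n_empty n M HM) addn0.
  rewrite [LHS](bigID (fun l : 'I_n => rimseq n M l != [::])) /=.
  rewrite [X in _ + X = _]big1 ?addn0 // => l; by rewrite negbK => /eqP ->.
have Hm : \sum_(1 <= p < n) mp n M p =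
   \sum_(l < n | rimseq n M l != [::]) \sum_(1 <= p < n) multB n (rimseq n M l) p.
  by rewrite /mp exchange_big.
rewrite Hd Hm; split.
  by apply: leq_sum => l Hl; case: (@per_l n M HM l Hl).
rewrite -sumnB; last by move=> l Hl; case: (@per_l n M HM l Hl).
apply: (big_ind (fun x => ~~ odd x)) => //.
  by move=> a b Ha Hb; rewrite oddD (negbTE Ha) (negbTE Hb).
by move=> l Hl; case: (@per_l n M HM l Hl).
Qed.
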